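(* Let $n\ge 2$, $c\ge 4$, $\Delta>0$, $d\le n$, and let $\hat V$ be a family of at most $n$ vectors in $\mathbb{R}^d$ such that every vertex has expected degree at most $c$ in $G\sim\mathcal{G}_{\hat V}$ and the expected number of triangles in $G\sim\mathcal{G}_{\hat V}$ is at least $\Delta n$. Assume moreover that $10c^3d\le \Delta n/\lg^2 n$ and $\Delta n/\lg^2 n+4\le \Delta n/2$. Let $V'\subseteq \hat V$ be the subfamily of vectors whose Euclidean length lies in $[n^{-2},2\sqrt n]$. Then every vertex has expected degree at most $c$ in $G\sim\mathcal{G}_{V'}$, and the expected number of triangles in $G\sim\mathcal{G}_{V'}$ is at least $\Delta n/2$.
   Context: For a finite family of vectors $W=(\vec w_i)_{i\in I}$ in $\mathbb{R}^d$, $\mathcal{G}_W$ is the distribution on simple undirected graphs with vertex set $I$ in which, independently for each unordered pair $\{i,j\}$ with $i\neq j$, the edge $(i,j)$ is present with probability $\max(0,\min(\vec w_i\cdot\vec w_j,1))$. The expected degree of $i$ is $\sum_{j\ne i}\max(0,\min(\vec w_i\cdot\vec w_j,1))$. A triangle is a set of three distinct pairwise adjacent vertices. $\lg$ is the base-2 logarithm. *)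

(* Defs.v *)
From Stdlib Require Import Reals.
From mathcomp Require Import all_boot.
Set Implicit Arguments. Unset Strict Implicit. Unset Printing Implicit Defensive.

Local Open Scope R_scope.

Definition lg (x : R) : R := ln x / ln 2.

Definition dotR (d : nat) (u v : 'I_d -> R) : R :=
  \big[Rplus/0]_(k < d) (u k * v k).
Definition normR (d : nat) (u : 'I_d -> R) : R := sqrt (dotR u u).

Section RandomGraph.
Variables (I : finType) (d : nat) (W : I -> 'I_d -> R).

Definition edgeP (i j : I) : R := Rmax 0 (Rmin (dotR (W i) (W j)) 1).

(* The subfamily (W_i)_{i in S}, S : {set I}, is the family considered.
   Unordered pairs {i,j}, i <> j, of vertices in S: *)
Definition pairs (S : {set I}) : {set {set I}} :=
  [set e : {set I} | (e \subset S) && (#|e| == 2)%N].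

Definition pairP (e : {set I}) : R :=
  match enum e with [:: i; j] => edgeP i j | _ => 0 end.

Definition graphProb (S : {set I}) (E : {set {set I}}) : R :=
  \big[Rmult/1]_(e in pairs S) (if e \in E then pairP e else 1 - pairP e).

Definition triangles (S : {set I}) (E : {set {set I}}) : {set {set I}} :=
  [set T : {set I} | [&& T \subset S, #|T| == 3%N
     & [forall e : {set I}, ((e \subset T) && (#|e| == 2)%N) ==> (e \in E)]]].

Definition expTriangles (S : {set I}) : R :=
  \big[Rplus/0]_(E in powerset (pairs S))
     (graphProb S E * INR #|triangles S E|).

Definition expDegree (S : {set I}) (i : I) : R :=
  \big[Rplus/0]_(j in S | j != i) edgeP i j.

End RandomGraph.

(* Main.v *)
Require Import Defs.
From Stdlib Require Import Reals Lra Lia.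
From HB Require Import structures.
From mathcomp Require Import all_boot.
Set Implicit Arguments. Unset Strict Implicit. Unset Printing Implicit Defensive.
Local Open Scope R_scope.

Lemma RplusA : associative Rplus. Proof. move=> *; ring. Qed.
Lemma RmultA : associative Rmult. Proof. move=> *; ring. Qed.
HB.instance Definition _ := Monoid.isComLaw.Build R 0 Rplus RplusA Rplus_comm Rplus_0_l.
HB.instance Definition _ := Monoid.isComLaw.Build R 1 Rmult RmultA Rmult_comm Rmult_1_l.
HB.instance Definition _ := Monoid.isMulLaw.Build R 0 Rmult Rmult_0_l Rmult_0_r.
HB.instance Definition _ := Monoid.isAddLaw.Build R Rmult Rplus Rmult_plus_distr_r Rmult_plus_distr_l.


Section H.
Variable (J : finType).

Lemma sum_le (P : pred J) (F G : J -> R) :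
  (forall i, P i -> F i <= G i) -> \big[Rplus/0]_(i | P i) F i <= \big[Rplus/0]_(i | P i) G i.
Proof. move=> h; apply: (big_ind2 (fun x y => x <= y)) => //; [lra| move=> *; lra]. Qed.

Lemma sum_ge0 (P : pred J) (F : J -> R) :
  (forall i, P i -> 0 <= F i) -> 0 <= \big[Rplus/0]_(i | P i) F i.
Proof. move=> h; apply: (big_ind (fun x => 0 <= x)) => //; [lra| move=> *; lra]. Qed.

Lemma sum_le_sub (P Q : pred J) (F G : J -> R) :
  (forall i, P i -> Q i) -> (forall i, Q i -> 0 <= G i) -> (forall i, P i -> F i <= G i) ->
  \big[Rplus/0]_(i | P i) F i <= \big[Rplus/0]_(i | Q i) G i.
Proof.
move=> PQ G0 FG; rewrite (big_mkcond P) (big_mkcond Q); apply: sum_le => i _.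
case: (boolP (P i)) => Pi; first by rewrite (PQ _ Pi); apply: FG.
by case Qi: (Q i); [exact: G0 | lra].
Qed.

Lemma prod_01 (P : pred J) (F : J -> R) :
  (forall i, P i -> 0 <= F i <= 1) -> 0 <= \big[Rmult/1]_(i | P i) F i <= 1.
Proof.
move=> h; apply: (big_ind (fun x => 0 <= x <= 1)) => //; first lra.
move=> x y hx hy; split; [apply: Rmult_le_pos; lra|].
rewrite -(Rmult_1_l 1); apply: Rmult_le_compat; lra.
Qed.

Lemma sum_mul_sum (K : finType) (P : pred J) (Q : pred K) (a : J -> R) (b : K -> R) :
  (\big[Rplus/0]_(i | P i) a i) * (\big[Rplus/0]_(j | Q j) b j) =
  \big[Rplus/0]_(i | P i) \big[Rplus/0]_(j | Q j) (a i * b j).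
Proof. by rewrite big_distrl; apply: eq_bigr => i _; rewrite big_distrr. Qed.

Lemma sum_card (P : pred J) : \big[Rplus/0]_(i | P i) 1 = INR #|P|.
Proof.
rewrite -sum1_card (big_morph INR plus_INR (erefl (INR 0))).
by apply: eq_bigr.
Qed.

Lemma sum_constR (P : pred J) (x : R) : \big[Rplus/0]_(i | P i) x = INR #|P| * x.
Proof. rewrite -sum_card big_distrl; apply: eq_bigr => i _ /=; ring. Qed.

End H.


Lemma CS (K : finType) (P : pred K) (f g : K -> R) :
  (\big[Rplus/0]_(k | P k) (f k * g k)) ^ 2 <=
  (\big[Rplus/0]_(k | P k) (f k * f k)) * (\big[Rplus/0]_(k | P k) (g k * g k)).
Proof.
have H : 0 <= \big[Rplus/0]_(k | P k) \big[Rplus/0]_(l | P l) (f k * g l - f l * g k)^2.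
  by apply: sum_ge0 => k _; apply: sum_ge0 => l _; apply: pow2_ge_0.
have E : \big[Rplus/0]_(k | P k) \big[Rplus/0]_(l | P l) (f k * g l - f l * g k)^2 =
  2 * ((\big[Rplus/0]_(k | P k) (f k * f k)) * (\big[Rplus/0]_(k | P k) (g k * g k)))
  - 2 * (\big[Rplus/0]_(k | P k) (f k * g k)) ^ 2.
  transitivity (\big[Rplus/0]_(k | P k) \big[Rplus/0]_(l | P l) ((f k*f k)*(g l*g l))
    + \big[Rplus/0]_(k | P k) \big[Rplus/0]_(l | P l) ((g k*g k)*(f l*f l))
    + \big[Rplus/0]_(k | P k) \big[Rplus/0]_(l | P l) ((-2*(f k*g k))*(f l*g l))).
    rewrite -!big_split; apply: eq_bigr => k _; rewrite -!big_split; apply: eq_bigr => l _ /=; ring.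
  rewrite -!sum_mul_sum -big_distrr /=; ring.
lra.
Qed.

Section Dot.
Variable d : nat.
Implicit Types u v : 'I_d -> R.

Lemma dot_comm u v : dotR u v = dotR v u.
Proof. by apply: eq_bigr => k _; rewrite Rmult_comm. Qed.

Lemma dot_self_ge0 u : 0 <= dotR u u.
Proof. by apply: sum_ge0 => k _; apply: Rle_0_sqr. Qed.

Lemma norm_ge0 u : 0 <= normR u.
Proof. exact: sqrt_pos. Qed.

Lemma norm_sq u : normR u * normR u = dotR u u.
Proof. by rewrite /normR sqrt_sqrt //; apply: dot_self_ge0. Qed.

Lemma abs_dot u v : Rabs (dotR u v) <= normR u * normR v.
Proof.
have h := CS predT u v.
have e : (normR u * normR v) * (normR u * normR v) = dotR u u * dotR v v.
  by rewrite -norm_sq -norm_sq; ring.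
have hu := norm_ge0 u; have hv := norm_ge0 v.
have hp : 0 <= normR u * normR v by apply: Rmult_le_pos.
change ((dotR u v)^2 <= dotR u u * dotR v v) in h.
rewrite -e in h.
set x := dotR u v in h *; set y := normR u * normR v in h e hp *.
have h1 : x <= y by destruct (Rle_dec x y) as [|n0]; [|nra].
have h2 : - y <= x by destruct (Rle_dec (-y) x) as [|n0]; [|nra].
unfold Rabs; destruct (Rcase_abs x); lra.
Qed.
End Dot.

Section Graph.
Variables (I : finType) (d : nat) (W : I -> 'I_d -> R).

Lemma edgeP_01 i j : 0 <= edgeP W i j <= 1.
Proof. rewrite /edgeP; unfold Rmax, Rmin; repeat destruct Rle_dec; lra. Qed.

Lemma edgeP_sym i j : edgeP W i j = edgeP W j i.
Proof. by rewrite /edgeP dot_comm. Qed.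

Lemma edgeP_one i j : 1 <= dotR (W i) (W j) -> edgeP W i j = 1.
Proof. rewrite /edgeP => h; unfold Rmax, Rmin; repeat destruct Rle_dec; lra. Qed.

Lemma edgeP_le i j : edgeP W i j <= normR (W i) * normR (W j).
Proof.
have h := abs_dot (W i) (W j); have := Rle_abs (dotR (W i) (W j)).
have hu := norm_ge0 (W i); have hv := norm_ge0 (W j).
have hp : 0 <= normR (W i) * normR (W j) by apply: Rmult_le_pos.
rewrite /edgeP; unfold Rmax, Rmin; repeat destruct Rle_dec; lra.
Qed.

Lemma pairP_01 e : 0 <= pairP W e <= 1.
Proof. rewrite /pairP; case: (enum e) => [|a [|b [|x s]]]; try lra; exact: edgeP_01. Qed.

Lemma pairP2 i j : i != j -> pairP W [set i; j] = edgeP W i j.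
Proof.
move=> ij; rewrite /pairP.
have hs : size (enum [set i; j]) = 2%N by rewrite -cardE cards2 ij.
have hu := enum_uniq (mem [set i; j]).
have hm : forall x, (x \in enum [set i; j]) = (x \in [set i; j]) by move=> x; rewrite mem_enum.
case E: (enum [set i; j]) hs hu hm => [|a [|b [|x s]]] //= _.
move=> ab hm.
rewrite !inE andbT in ab.
have ha := hm a; have hb := hm b.
rewrite !inE !eqxx /= in ha hb.
have {}ha := esym ha; have {}hb := esym hb.
rewrite orbT in ha hb.
case/orP: (ha); case/orP: (hb); move=> /eqP hb' /eqP ha'; subst.
all: first [ done | by rewrite edgeP_sym | by rewrite eqxx in ab | by rewrite eqxx in ij ].
Qed.
End Graph.


Section Tri.
Variables (I : finType) (d : nat) (V : I -> 'I_d -> R).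

Definition tri3 (S : {set I}) := [set T : {set I} | (T \subset S) && (#|T| == 3%N)].
Definition tw (T : {set I}) := \big[Rmult/1]_(e in pairs T) pairP V e.

Lemma prod0 (J : finType) (P : pred J) (F : J -> R) x : P x -> F x = 0 ->
  \big[Rmult/1]_(i | P i) F i = 0.
Proof. by move=> Px Fx; rewrite (bigD1 x) //= Fx Rmult_0_l. Qed.

Lemma gp_sum (P F : {set {set I}}) : F \subset P ->
  \big[Rplus/0]_(E in powerset P | F \subset E)
     \big[Rmult/1]_(e in P) (if e \in E then pairP V e else 1 - pairP V e)
  = \big[Rmult/1]_(e in F) pairP V e.
Proof.
move=> FP.
pose A := fun e => if e \in P then pairP V e else 0.
pose B := fun e => if e \in P then (if e \in F then 0 else 1 - pairP V e) else 1.
have L := @bigA_distr R 0 1 Rmult Rplus _ A B.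
have L1 : \big[Rmult/1]_i (A i + B i) = \big[Rmult/1]_(e in F) pairP V e.
  rewrite [RHS]big_mkcond /=; apply: eq_bigr => e _; rewrite /A /B.
  case: (boolP (e \in F)) => eF; first by rewrite (subsetP FP _ eF); ring.
  by case: (e \in P); ring.
rewrite -L1 L big_mkcond [RHS]big_mkcond; apply: eq_bigr => J _ /=.
case: (boolP ((J \in powerset P) && (F \subset J))) => [/andP [JP FJ] | ncond].
  rewrite powersetE in JP.
  rewrite big_mkcond; apply: eq_bigr => e _; rewrite /A /B.
  case eP: (e \in P); case eJ: (e \in J) => //.
    case eF: (e \in F) => //.
    by rewrite (subsetP FJ _ eF) in eJ.
  by rewrite (subsetP JP _ eJ) in eP.
symmetry.
case: (boolP (J \subset P)) => JP.
  have FJ : ~~ (F \subset J) by move: ncond; rewrite powersetE JP.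
  case/subsetPn: FJ => e eF eJ.
  apply: (@prod0 _ predT _ e) => //.
  by rewrite /B (negbTE eJ) (subsetP FP _ eF) eF.
case/subsetPn: JP => e eJ eP.
apply: (@prod0 _ predT _ e) => //.
by rewrite /A eJ (negbTE eP).
Qed.
Lemma pairsS (T S : {set I}) : T \subset S -> pairs T \subset pairs S.
Proof.
move=> TS; apply/subsetP => e; rewrite !inE => /andP[eT ->]; rewrite andbT.
exact: subset_trans eT TS.
Qed.

Lemma expT_formula S : expTriangles V S = \big[Rplus/0]_(T in tri3 S) tw T.
Proof.
rewrite /expTriangles.
have ht : forall E, INR #|triangles S E| =
    \big[Rplus/0]_(T | (T \in tri3 S) && (pairs T \subset E)) 1.
  move=> E; rewrite sum_card; congr INR; apply: eq_card => T; rewrite !inE.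
  have -> : [forall e : {set I}, (e \subset T) && (#|e| == 2%N) ==> (e \in E)] = (pairs T \subset E).
    apply/forallP/subsetP => h e.
      by rewrite inE => he; exact: (implyP (h e) he).
    by apply/implyP => he; apply: h; rewrite inE.
  by rewrite unfold_in /= inE andbA.
under eq_bigr do rewrite ht big_distrr /=.
rewrite (exchange_big_dep (fun T => T \in tri3 S)) /=; last by move=> E T _ /andP[].
apply: eq_bigr => T TS.
under eq_bigl do rewrite TS /=.
under eq_bigr do rewrite Rmult_1_r.
rewrite /graphProb /tw; apply: gp_sum; apply: pairsS.
by move: TS; rewrite inE => /andP[].
Qed.
End Tri.


Section Lost.
Variables (I : finType) (d : nat) (V : I -> 'I_d -> R).

Lemma edgeP_ge0 i j : 0 <= edgeP V i j.
Proof. by case: (edgeP_01 V i j). Qed.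

Lemma tw_le (T : {set I}) i j k : i != j -> i != k -> j != k -> T = i |: [set j; k] ->
  tw V T <= edgeP V i j * edgeP V i k.
Proof.
move=> ij ik jk ->.
have inP : forall x y, x != y -> x \in i |: [set j; k] -> y \in i |: [set j; k] ->
    [set x; y] \in pairs (i |: [set j; k]).
  move=> x y xy hx hy; rewrite inE cards2 xy andbT.
  by apply/subsetP => z; rewrite in_set2 => /orP[]/eqP->.
have hi : i \in i |: [set j; k] by rewrite !inE eqxx.
have hj : j \in i |: [set j; k] by rewrite !inE eqxx orbT.
have hk : k \in i |: [set j; k] by rewrite !inE eqxx !orbT.
have neq : [set i; k] != [set i; j].
  apply/eqP => h; have : k \in [set i; j] by rewrite -h !inE eqxx orbT.
  by rewrite !inE (eq_sym k i) (negbTE ik) (eq_sym k j) (negbTE jk).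
rewrite /tw (bigD1 [set i; j]) /=; last exact: inP.
rewrite (bigD1 [set i; k]) /=; last by rewrite inP.
rewrite !pairP2 //.
set r := \big[Rmult/1]_(e | _) _.
have hr : 0 <= r <= 1 by apply: prod_01 => e _; apply: pairP_01.
have h1 := edgeP_01 V i j; have h2 := edgeP_01 V i k.
have h3 : edgeP V i k * r <= edgeP V i k by nra.
apply: Rmult_le_compat_l; lra.
Qed.

Lemma L1 i (Q : pred {set I}) :
  \big[Rplus/0]_(T | (T \in tri3 [set: I]) && ((i \in T) && Q T)) tw V T <=
  \big[Rplus/0]_(p : I * I | (p.1 != i) && (p.2 != i) && Q (i |: [set p.1; p.2]))
      (edgeP V i p.1 * edgeP V i p.2).
Proof.
rewrite (partition_big (fun p : I * I => i |: [set p.1; p.2]) predT) //=.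
apply: sum_le_sub => [T _ // | T _ | T /andP[T3 /andP[iT QT]]].
  apply: sum_ge0 => p _; apply: Rmult_le_pos; apply: edgeP_ge0.
move: T3; rewrite inE subsetT /= => /eqP T3.
have c2 : #|T :\ i| == 2%N.
  by move: T3; rewrite (cardsD1 i T) iT => -[]; rewrite add0n => ->.
case/cards2P: c2 => j [k [jk Tjk]].
have hj : j \in T :\ i by rewrite Tjk !inE eqxx.
have hk : k \in T :\ i by rewrite Tjk !inE eqxx orbT.
rewrite !inE in hj hk; case/andP: hj => ji _; case/andP: hk => ki _.
have hT : i |: [set j; k] = T by rewrite -Tjk setD1K.
rewrite (bigD1 (j, k)) /=; last by rewrite ji ki hT QT eqxx.
set r := \big[Rplus/0]_(p | _) _.
have hr : 0 <= r by apply: sum_ge0 => p _; apply: Rmult_le_pos; apply: edgeP_ge0.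
have := tw_le (T := T) (i := i) (j := j) (k := k).
rewrite eq_sym ji eq_sym ki jk hT => /(_ isT isT isT erefl) h; lra.
Qed.
End Lost.


Lemma ex4 (A B : finType) (PA : pred A) (PB : pred B) (F : A -> A -> B -> B -> R) :
  \big[Rplus/0]_(i | PA i) \big[Rplus/0]_(j | PA j) \big[Rplus/0]_(k | PB k) \big[Rplus/0]_(l | PB l) F i j k l =
  \big[Rplus/0]_(k | PB k) \big[Rplus/0]_(l | PB l) \big[Rplus/0]_(i | PA i) \big[Rplus/0]_(j | PA j) F i j k l.
Proof.
transitivity (\big[Rplus/0]_(i | PA i) \big[Rplus/0]_(k | PB k) \big[Rplus/0]_(j | PA j) \big[Rplus/0]_(l | PB l) F i j k l).
  by apply: eq_bigr => i _; apply: exchange_big.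
rewrite exchange_big; apply: eq_bigr => k _.
transitivity (\big[Rplus/0]_(i | PA i) \big[Rplus/0]_(l | PB l) \big[Rplus/0]_(j | PA j) F i j k l).
  by apply: eq_bigr => i _; apply: exchange_big.
exact: exchange_big.
Qed.

Section Geo.
Variables (I : finType) (d : nat) (V : I -> 'I_d -> R) (n : nat) (c : R).
Hypothesis hn : (0 < INR n).
Hypothesis hdn : (d <= n)%nat.
Hypothesis hdeg : forall i, expDegree V [set: I] i <= c.
Hypothesis hc0 : 0 <= c.
Variable L : {set I}.
Hypothesis hL : forall i, i \in L -> 2 * sqrt (INR n) < normR (V i).

Let r i := normR (V i).
Let w i := fun k => V i k / r i.
Let G i j := dotR (w i) (w j).
Let eps := / (4 * INR n).

Lemma r_pos i : i \in L -> 0 < r i.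
Proof. move=> /hL h; have := sqrt_pos (INR n); rewrite /r; lra. Qed.

Lemma G_def i j : i \in L -> j \in L -> G i j = dotR (V i) (V j) / (r i * r j).
Proof.
move=> iL jL; have hi := r_pos iL; have hj := r_pos jL.
rewrite /G /dotR /Rdiv big_distrl; apply: eq_bigr => k _ /=; rewrite /w; field; lra.
Qed.

Lemma G_ii i : i \in L -> G i i = 1.
Proof.
move=> iL; rewrite G_def // -norm_sq; have := r_pos iL; rewrite /r => h; field; lra.
Qed.

Lemma G_bnd i j : i \in L -> j \in L -> -1 <= G i j <= 1.
Proof.
move=> iL jL; have hi := r_pos iL; have hj := r_pos jL.
have ha := abs_dot (V i) (V j).
have hq : 0 < r i * r j by apply: Rmult_lt_0_compat.
have e : G i j * (r i * r j) = dotR (V i) (V j) by rewrite G_def //; field; lra.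
move: ha; rewrite -/(r i) -/(r j); set q := r i * r j in hq e *.
unfold Rabs; destruct Rcase_abs => h.
  split; [|nra]. destruct (Rle_dec (-1) (G i j)); [done|nra].
split; [nra|]. destruct (Rle_dec (G i j) 1); [done|nra].
Qed.

Lemma G_pair i j : i \in L -> j \in L -> i != j ->
  G i j * G i j + G i j <= 2 * edgeP V i j + 2 * eps.
Proof.
move=> iL jL ij.
have hi := hL iL; have hj := hL jL.
have hs := sqrt_pos (INR n); have hss := sqrt_sqrt (INR n) (Rlt_le _ _ hn).
have hq : 4 * INR n < r i * r j.
  have : (2 * sqrt (INR n)) * (2 * sqrt (INR n)) < r i * r j.
    apply: Rmult_le_0_lt_compat; rewrite /r; lra.
  nra.
have e : G i j * (r i * r j) = dotR (V i) (V j).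
  by rewrite G_def //; field; have := r_pos iL; have := r_pos jL; lra.
have [gl gu] := G_bnd iL jL.
have he0 := edgeP_ge0 V i j.
have heps : eps * (4 * INR n) = 1 by rewrite /eps; field; lra.
have heps0 : 0 < eps by rewrite /eps; apply: Rinv_0_lt_compat; lra.
set q := r i * r j in hq e.
set g := G i j in gl gu e *.
destruct (Rle_dec 1 (dotR (V i) (V j))) as [h1|h1].
  rewrite edgeP_one //; nra.
destruct (Rle_dec 0 (dotR (V i) (V j))) as [h0|h0].
  have g0 : 0 <= g by destruct (Rle_dec 0 g); [done|nra].
  have g1 : g * (4 * INR n) < 1 by nra.
  have g2 : g < eps by nra.
  nra.
have g0 : g < 0 by destruct (Rle_dec 0 g); nra.
nra.
Qed.

Lemma S1_ge0 : 0 <= \big[Rplus/0]_(i in L) \big[Rplus/0]_(j in L) G i j.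
Proof.
have -> : \big[Rplus/0]_(i in L) \big[Rplus/0]_(j in L) G i j =
   \big[Rplus/0]_(k < d) ((\big[Rplus/0]_(i in L) w i k) * (\big[Rplus/0]_(j in L) w j k)).
  transitivity (\big[Rplus/0]_(i in L) \big[Rplus/0]_(k < d) \big[Rplus/0]_(j in L) (w i k * w j k)).
    by apply: eq_bigr => i _; rewrite /G /dotR exchange_big.
  rewrite exchange_big; apply: eq_bigr => k _; by rewrite sum_mul_sum.
by apply: sum_ge0 => k _; apply: Rle_0_sqr.
Qed.

Lemma tr_bound : INR #|L| * INR #|L| <=
   INR d * \big[Rplus/0]_(i in L) \big[Rplus/0]_(j in L) (G i j * G i j).
Proof.
pose M k l := \big[Rplus/0]_(i in L) (w i k * w i l).
have e2 : \big[Rplus/0]_(i in L) \big[Rplus/0]_(j in L) (G i j * G i j) =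
    \big[Rplus/0]_(k < d) \big[Rplus/0]_(l < d) (M k l * M k l).
  transitivity (\big[Rplus/0]_(i in L) \big[Rplus/0]_(j in L) \big[Rplus/0]_(k < d)
     \big[Rplus/0]_(l < d) ((w i k * w j k) * (w i l * w j l))).
    by apply: eq_bigr => i _; apply: eq_bigr => j _; rewrite /G /dotR sum_mul_sum.
  rewrite ex4; apply: eq_bigr => k _; apply: eq_bigr => l _.
  rewrite /M sum_mul_sum; apply: eq_bigr => i _; apply: eq_bigr => j _; ring.
have e1 : INR #|L| = \big[Rplus/0]_(k < d) (1 * M k k).
  rewrite -sum_card.
  transitivity (\big[Rplus/0]_(i in L) G i i).
    by apply: eq_bigr => i iL; rewrite G_ii.
  rewrite /G /dotR exchange_big; apply: eq_bigr => k _; rewrite Rmult_1_l.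
  by apply: eq_bigr.
have hd : \big[Rplus/0]_(k < d) (1 * 1) = INR d.
  by rewrite (eq_bigr (fun _ => 1)) ?sum_card ?card_ord // => k _; ring.
have hcs := CS (fun _ : 'I_d => true) (fun _ => 1) (fun k => M k k).
rewrite -e1 hd /= in hcs.
have hge : \big[Rplus/0]_(k < d) (M k k * M k k) <= \big[Rplus/0]_(k < d) \big[Rplus/0]_(l < d) (M k l * M k l).
  apply: sum_le => k _; rewrite (bigD1 k) //=.
  set s := \big[Rplus/0]_(l | _) _.
  have : 0 <= s by apply: sum_ge0 => l _; apply: Rle_0_sqr.
  lra.
rewrite e2; have := pos_INR d; move: hcs; rewrite Rmult_1_r => h1 h0.
apply: Rle_trans h1 _; exact: Rmult_le_compat_l.
Qed.

Lemma per_i i : i \in L ->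
  \big[Rplus/0]_(j in L) (G i j * G i j + G i j) <= 2 + 2 * c + 2 * eps * INR #|L|.
Proof.
move=> iL; rewrite (bigD1 i) //= G_ii //.
have h : \big[Rplus/0]_(j in L | j != i) (G i j * G i j + G i j) <=
   \big[Rplus/0]_(j in L | j != i) (2 * edgeP V i j) + \big[Rplus/0]_(j in L | j != i) (2 * eps).
  rewrite -big_split; apply: sum_le => j /andP[jL ji] /=; apply: G_pair => //; by rewrite eq_sym.
have h1 : \big[Rplus/0]_(j in L | j != i) (2 * edgeP V i j) <= 2 * c.
  apply: (@Rle_trans _ (\big[Rplus/0]_(j in [set: I] | j != i) (2 * edgeP V i j))).
    apply: sum_le_sub => j; first by case/andP=> _ ->; rewrite in_setT.
      by move=> _; have := edgeP_ge0 V i j; lra.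
    move=> _; lra.
  rewrite -big_distrr /=; have := hdeg i; rewrite /expDegree; lra.
have h2 : \big[Rplus/0]_(j in L | j != i) (2 * eps) <= 2 * eps * INR #|L|.
  have he : 0 < eps by rewrite /eps; apply: Rinv_0_lt_compat; lra.
  apply: (@Rle_trans _ (\big[Rplus/0]_(j in L) (2 * eps))); last by rewrite sum_constR Rmult_comm; apply: Req_le.
  apply: sum_le_sub => j; first by case/andP.
    by move=> _; lra.
  by move=> _; lra.
lra.
Qed.

Lemma long_card : INR #|L| <= 4 * INR d * (1 + c).
Proof.
set m := INR #|L|.
have hm : 0 <= m := pos_INR _.
have hS : \big[Rplus/0]_(i in L) \big[Rplus/0]_(j in L) (G i j * G i j) <= m * (2 + 2 * c + 2 * eps * m).
  have := S1_ge0.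
  have : \big[Rplus/0]_(i in L) \big[Rplus/0]_(j in L) (G i j * G i j + G i j) <=
         \big[Rplus/0]_(i in L) (2 + 2 * c + 2 * eps * m) by apply: sum_le => i; apply: per_i.
  rewrite sum_constR -/m.
  have -> : \big[Rplus/0]_(i in L) \big[Rplus/0]_(j in L) (G i j * G i j + G i j) =
     \big[Rplus/0]_(i in L) \big[Rplus/0]_(j in L) (G i j * G i j) +
     \big[Rplus/0]_(i in L) \big[Rplus/0]_(j in L) G i j.
    by rewrite -big_split; apply: eq_bigr => i _; rewrite -big_split.
  lra.
have ht := tr_bound; rewrite -/m in ht.
have hd : INR d <= INR n by apply: le_INR; apply/leP.
have hd0 := pos_INR d.
have hde : INR d * eps <= / 4.
  rewrite /eps Rinv_mult; have : 0 < / INR n by apply: Rinv_0_lt_compat.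
  have : INR d * / INR n <= 1.
    apply: (Rmult_le_reg_r (INR n)) => //; rewrite Rmult_assoc Rinv_l; lra.
  nra.
have h2 : m * m <= INR d * (m * (2 + 2 * c)) + m * m / 2.
  have hmm : 0 <= m * m by nra.
  have : INR d * (m * (2 * eps * m)) <= m * m / 2.
    replace (INR d * (m * (2 * eps * m))) with (2 * (INR d * eps) * (m * m)) by ring.
    apply: (@Rle_trans _ (2 * / 4 * (m * m))); last lra.
    apply: Rmult_le_compat_r => //; lra.
  have e3 : INR d * (m * (2 + 2 * c + 2 * eps * m)) = INR d * (m * (2 + 2 * c)) + INR d * (m * (2 * eps * m)) by ring.
  have : m * m <= INR d * (m * (2 + 2 * c + 2 * eps * m)).
    apply: Rle_trans ht _; apply: Rmult_le_compat_l => //.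
  lra.
have h3 : m * m <= m * (4 * INR d * (1 + c)).
  replace (m * (4 * INR d * (1 + c))) with (2 * (INR d * (m * (2 + 2 * c)))) by ring; lra.
destruct (Rle_dec m (4 * INR d * (1 + c))) as [|h4]; first done.
have hK : 0 <= 4 * INR d * (1 + c) by apply: Rmult_le_pos; lra.
have : 0 < m * (m - 4 * INR d * (1 + c)) by apply: Rmult_lt_0_compat; lra.
nra.
Qed.

End Geo.


Section Final.
Variables (I : finType) (d : nat) (V : I -> 'I_d -> R) (n : nat) (c : R).
Hypothesis hn : 0 < INR n.
Hypothesis hIn : (#|I| <= n)%nat.
Hypothesis hdeg : forall i, expDegree V [set: I] i <= c.
Variables okS okL : pred I.
Hypothesis hS : forall i, ~~ okS i -> normR (V i) <= / (INR n ^ 2).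
Hypothesis hL : forall i, okL i -> normR (V i) <= 2 * sqrt (INR n).

Lemma tw_ge0 T : 0 <= tw V T.
Proof. by case: (@prod_01 _ (fun e => e \in pairs T) (pairP V) (fun e _ => pairP_01 V e)). Qed.

Definition bad (T : {set I}) i :=
  (i \in T) && (~~ okL i || (~~ okS i && [forall x in T, okL x])).

Lemma lost1 :
  \big[Rplus/0]_(T | (T \in tri3 [set: I]) && ~~ (T \subset [set i | okS i && okL i])) tw V T <=
  \big[Rplus/0]_i \big[Rplus/0]_(T | (T \in tri3 [set: I]) && bad T i) tw V T.
Proof.
rewrite -(exchange_big_dep predT) //=.
apply: sum_le_sub => [T /andP[] // | T _ | T /andP[T3 nsub]].
  by apply: sum_ge0 => i _; apply: tw_ge0.
have hr : forall x, bad T x -> tw V T <= \big[Rplus/0]_(i | bad T i) tw V T.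
  move=> x bx; rewrite (bigD1 x) //=.
  have : 0 <= \big[Rplus/0]_(i | bad T i && (i != x)) tw V T by apply: sum_ge0 => *; apply: tw_ge0.
  lra.
case: (boolP [exists x in T, ~~ okL x]) => [/exists_inP [x xT nx] | nex].
  by apply: (hr x); rewrite /bad xT nx.
case/subsetPn: nsub => x xT; rewrite inE => nx.
have hall : [forall y in T, okL y].
  apply/forall_inP => y yT; apply/negPn/negP => hy; apply: (negP nex).
  by apply/exists_inP; exists y.
have oLx : okL x by move/forall_inP: hall; apply.
apply: (hr x); rewrite /bad xT hall oLx /= andbT.
by move: nx; rewrite oLx andbT.
Qed.


Lemma per_long i : ~~ okL i ->
  \big[Rplus/0]_(T | (T \in tri3 [set: I]) && bad T i) tw V T <= c * c.
Proof.
move=> nL.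
apply: (@Rle_trans _ (\big[Rplus/0]_(T | (T \in tri3 [set: I]) && ((i \in T) && xpredT T)) tw V T)).
  apply: sum_le_sub => T; first by case/andP => -> /andP[-> _].
    by move=> _; apply: tw_ge0.
  by move=> _; lra.
apply: Rle_trans (L1 V i xpredT) _.
rewrite (eq_bigl (fun p : I * I => (p.1 != i) && (p.2 != i))); last by move=> p; rewrite andbT.
have -> : \big[Rplus/0]_(p : I * I | (p.1 != i) && (p.2 != i)) (edgeP V i p.1 * edgeP V i p.2) =
   \big[Rplus/0]_(j | j != i) \big[Rplus/0]_(k | k != i) (edgeP V i j * edgeP V i k).
  by rewrite pair_big.
rewrite -sum_mul_sum.
have e : \big[Rplus/0]_(j | j != i) edgeP V i j = expDegree V [set: I] i.
  by rewrite /expDegree; apply: eq_bigl => j; rewrite in_setT.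
rewrite e; have := hdeg i.
have : 0 <= expDegree V [set: I] i by apply: sum_ge0 => j _; apply: edgeP_ge0.
nra.
Qed.

Lemma per_ok i : okL i -> okS i ->
  \big[Rplus/0]_(T | (T \in tri3 [set: I]) && bad T i) tw V T = 0.
Proof.
by move=> oL oS; apply: big_pred0 => T; rewrite /bad oL oS /= !andbF.
Qed.

Lemma per_short i : okL i -> ~~ okS i ->
  \big[Rplus/0]_(T | (T \in tri3 [set: I]) && bad T i) tw V T <= 4 / INR n.
Proof.
move=> oL nS.
pose Q := fun T : {set I} => [forall x in T, okL x].
apply: (@Rle_trans _ (\big[Rplus/0]_(T | (T \in tri3 [set: I]) && ((i \in T) && Q T)) tw V T)).
  apply: sum_le_sub => T; first by case/andP => -> /andP[-> /orP[]]; rewrite ?oL // nS.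
    by move=> _; apply: tw_ge0.
  by move=> _; lra.
apply: Rle_trans (L1 V i Q) _.
set a := / (INR n ^ 2) * (2 * sqrt (INR n)).
have hs := sqrt_pos (INR n); have hss := sqrt_sqrt (INR n) (Rlt_le _ _ hn).
have hn2 : 0 < / (INR n ^ 2) by apply: Rinv_0_lt_compat; apply: pow_lt.
have ha : 0 <= a by rewrite /a; apply: Rmult_le_pos; lra.
have hb : forall j, okL j -> edgeP V i j <= a.
  move=> j oj; apply: Rle_trans (edgeP_le V i j) _; rewrite /a.
  have := norm_ge0 (V i); have := norm_ge0 (V j).
  have := hS nS; have := hL oj.
  move=> h1 h2 h3 h4; apply: Rmult_le_compat => //.
apply: (@Rle_trans _ (\big[Rplus/0]_(p : I * I) (a * a))).
  apply: sum_le_sub => // p; first by move=> _; nra.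
  case/andP=> _ /forall_inP hq.
  have m1 : p.1 \in i |: [set p.1; p.2] by rewrite !inE eqxx orbT.
  have m2 : p.2 \in i |: [set p.1; p.2] by rewrite !inE eqxx !orbT.
  have h1 := hb p.1 (hq _ m1).
  have h2 := hb p.2 (hq _ m2).
  have := edgeP_ge0 V i p.1; have := edgeP_ge0 V i p.2.
  move=> h3 h4; apply: Rmult_le_compat => //.
rewrite sum_constR.
have -> : #|(fun _ : I * I => true)| = (#|I| * #|I|)%N by rewrite -card_prod; apply: eq_card.
rewrite mult_INR.
have hN : INR #|I| <= INR n by apply: le_INR; apply/leP.
have hN0 := pos_INR #|I|.
have haa : a * a = 4 / (INR n ^ 3).
  rewrite /a; replace (/ INR n ^ 2 * (2 * sqrt (INR n)) * (/ INR n ^ 2 * (2 * sqrt (INR n))))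
    with (4 * (sqrt (INR n) * sqrt (INR n)) / (INR n ^ 2 * INR n ^ 2)); last by field; lra.
  rewrite hss; field; lra.
rewrite haa.
apply: (@Rle_trans _ (INR n * INR n * (4 / INR n ^ 3))).
  apply: Rmult_le_compat_r; last by apply: Rmult_le_compat.
  apply: Rmult_le_pos; [lra | apply: Rlt_le; apply: Rinv_0_lt_compat; apply: pow_lt; lra].
right; field; lra.
Qed.

Lemma lost2 :
  \big[Rplus/0]_i \big[Rplus/0]_(T | (T \in tri3 [set: I]) && bad T i) tw V T <=
  4 + INR #|[set i | ~~ okL i]| * (c * c).
Proof.
have h4 : 0 <= 4 / INR n by apply: Rmult_le_pos; [lra | apply: Rlt_le; apply: Rinv_0_lt_compat].
apply: (@Rle_trans _ (\big[Rplus/0]_i (if okL i then 4 / INR n else c * c))).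
  apply: sum_le => i _; case oL: (okL i).
    case oS: (okS i); first by rewrite per_ok.
    by apply: per_short; rewrite ?oS.
  by apply: per_long; rewrite oL.
rewrite (bigID okL) /=.
rewrite (eq_bigr (fun _ => 4 / INR n)); last by move=> i ->.
rewrite [X in _ + X <= _](eq_bigr (fun _ => c * c)); last by move=> i /negbTE ->.
rewrite !sum_constR.
have -> : #|(fun i => ~~ okL i)| = #|[set i | ~~ okL i]| by apply: eq_card => i; rewrite inE.
have hc : INR #|okL| <= INR n by apply: le_INR; apply/leP; apply: leq_trans (max_card _) hIn.
have : INR #|okL| * (4 / INR n) <= 4.
  apply: (@Rle_trans _ (INR n * (4 / INR n))); first by apply: Rmult_le_compat_r.
  right; field; lra.
lra.
Qed.
End Final.


Unset Implicit Arguments.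

Theorem mainTheorem6 (n d : nat) (c Delta : R) (I : finType)
  (V : I -> 'I_d -> R) :
  (2 <= n)%nat -> 4 <= c -> 0 < Delta -> (d <= n)%nat -> (#|I| <= n)%nat ->
  (forall i : I, expDegree V [set: I] i <= c) ->
  Delta * INR n <= expTriangles V [set: I] ->
  10 * c ^ 3 * INR d <= Delta * INR n / (lg (INR n)) ^ 2 ->
  Delta * INR n / (lg (INR n)) ^ 2 + 4 <= Delta * INR n / 2 ->
  let V' := [set i : I | (if Rle_dec (/ (INR n ^ 2)) (normR (V i)) then true else false)
                          && (if Rle_dec (normR (V i)) (2 * sqrt (INR n)) then true else false)] in
  (forall i : I, i \in V' -> expDegree V V' i <= c) /\
  Delta * INR n / 2 <= expTriangles V V'.
Proof.
move=> hn2 hc4 hD hdn hIn hdeg hT h10 hlg V'.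
have hn : 0 < INR n.
  apply: lt_0_INR; apply/ltP; exact: leq_trans hn2.
split.
  move=> i _; apply: Rle_trans (hdeg i); rewrite /expDegree.
  apply: sum_le_sub => j; first by case/andP => _ ->; rewrite in_setT.
    by move=> _; apply: edgeP_ge0.
  by move=> _; lra.
pose okS := fun i => if Rle_dec (/ (INR n ^ 2)) (normR (V i)) then true else false.
pose okL := fun i => if Rle_dec (normR (V i)) (2 * sqrt (INR n)) then true else false.
have eV : V' = [set i | okS i && okL i] by [].
have hS : forall i, ~~ okS i -> normR (V i) <= / (INR n ^ 2).
  by move=> i; rewrite /okS; destruct Rle_dec => // _; lra.
have hL : forall i, okL i -> normR (V i) <= 2 * sqrt (INR n).
  by move=> i; rewrite /okL; destruct Rle_dec.
have hL2 : forall i, i \in [set i | ~~ okL i] -> 2 * sqrt (INR n) < normR (V i).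
  by move=> i; rewrite inE /okL; destruct Rle_dec => // _; lra.
have hlost := Rle_trans _ _ _ (lost1 V okS okL) (lost2 hn hIn hdeg hS hL).
have hm := long_card hn hdn hdeg (ltac:(lra)) hL2.
rewrite !expT_formula in hT *.
rewrite (bigID (fun T : {set I} => T \subset V')) /= in hT.
have e : \big[Rplus/0]_(T in tri3 [set: I] | T \subset V') tw V T =
         \big[Rplus/0]_(T in tri3 V') tw V T.
  by apply: eq_bigl => T; rewrite !inE subsetT /= andbC.
rewrite e in hT; rewrite [in X in _ <= _ + X]eV in hT.
set m := INR #|[set i | ~~ okL i]| in hlost hm.
set lost := \big[Rplus/0]_(T | _ && ~~ _) tw V T in hT hlost.
have hm0 : 0 <= m := pos_INR _.
have hd0 := pos_INR d.
have hmc : m * (c * c) <= 10 * c ^ 3 * INR d.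
  apply: (@Rle_trans _ (4 * INR d * (1 + c) * (c * c))).
    apply: Rmult_le_compat_r => //; nra.
  have : 0 <= INR d * (c * c) by nra.
  simpl; nra.
lra.
Qed.
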